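(* Let $T$ be a reducing triangulation of an oriented surface without boundary; the surface may be compact or a covering space of a compact one, in which case $T$ is the lift of a reducing triangulation. Any two reduced walks in $T$ that are homotopic (as paths with fixed endpoints) are equal.
   Context: A triangulation is an embedded graph whose faces are all open disks bounded by three edge-sides. A reducing triangulation $T$ of an oriented surface without boundary is a triangulation in which every vertex has degree at least $8$ and each triangle is colored red or blue so that adjacent triangles have different colors. It may be infinite, for instance when lifted to a covering space together with its colors. Suppose a walk traverses a directed edge $e$ into a vertex $v$ and then leaves $v$ along a directed edge $e'$. This occurrence of $v$ makes a $k$-turn ($k\ge 0$) if exactly $k$ triangles around $v$ lie to the left of the length-two walk $e\,e'$, between $e$ and $e'$ in the cyclic order around $v$. It makes a $-k$-turn ($k\ge 1$) if exactly $k$ triangles lie to its right. A turn is named by an integer in $\{-3,\dots,3\}$ when possible, which is unambiguous since degrees are at least $8$; otherwise it is named by the positive integer. A $k_b$-turn (resp. $k_r$-turn) is a $k$-turn in which the triangle to the left of $e$ is blue (resp. red). A bad turn is a $0$-turn, a $1$-turn, a $-1$-turn, a $2_r$-turn or a $-2_r$-turn. A walk $(v_0,e_0,v_1,\dots,e_{k-1},v_k)$ is reduced if none of its interior vertices $v_1,\dots,v_{k-1}$ makes a bad turn. A walk of length $0$ or $1$ is trivially reduced. *)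

(* Defs.v *)
(* Combinatorial (dart / rotation-system) model of a
   triangulation of an oriented surface without boundary. *)
From Stdlib Require Import List Arith Relations.
Import ListNotations.

(* A map: darts D (directed edges), vertices V.
   rev d      : the reverse dart of d.
   sigma d    : the next dart counterclockwise around the vertex tail d.
   sigma_inv  : its inverse.
   tail d     : the vertex dart d leaves from.
   red d      : colour of the triangle lying to the LEFT of dart d
                (true = red, false = blue). *)
Record surf_map := Map {
  D : Type;
  V : Type;
  rev : D -> D;
  sigma : D -> D;
  sigma_inv : D -> D;
  tail : D -> V;
  red : D -> bool
}.

Arguments rev {s} _.
Arguments sigma {s} _.
Arguments sigma_inv {s} _.
Arguments tail {s} _.
Arguments red {s} _.

Definition head {M : surf_map} (d : D M) : V M := tail (rev d).

(* face permutation: phi d is the dart following d along the boundary of the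
   triangle lying to the left of d *)
Definition phi {M : surf_map} (d : D M) : D M := sigma_inv (rev d).

Definition degree (M : surf_map) (x : D M) (n : nat) : Prop :=
  0 < n /\ Nat.iter n (@sigma M) x = x /\
  (forall m, 0 < m < n -> Nat.iter m (@sigma M) x <> x).

Definition reducing_triangulation (M : surf_map) : Prop :=
  (forall d : D M, rev (rev d) = d) /\
  (forall d : D M, rev d <> d) /\
  (forall d : D M, sigma (sigma_inv d) = d) /\
  (forall d : D M, sigma_inv (sigma d) = d) /\
  (forall v : V M, exists d : D M, tail d = v) /\
  (forall d d' : D M, tail d = tail d' <-> exists k, Nat.iter k (@sigma M) d = d') /\
  (forall d : D M, exists n, degree M d n /\ 8 <= n) /\
  (forall d : D M, Nat.iter 3 (@phi M) d = d /\ phi d <> d) /\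
  (forall d : D M, red (phi d) = red d) /\
  (forall d : D M, red (rev d) <> red d).

Definition finite_map (M : surf_map) : Prop :=
  exists l : list (D M), forall d, In d l.

Definition covering (M M' : surf_map) (f : D M -> D M') : Prop :=
  (forall d, f (rev d) = rev (f d)) /\
  (forall d, f (sigma d) = sigma (f d)) /\
  (forall d, red (f d) = red d) /\
  (forall d n, degree M d n -> degree M' (f d) n) /\
  (forall d', exists d, f d = d').

Definition compact_or_lift (M : surf_map) : Prop :=
  finite_map M \/
  exists (M' : surf_map) (f : D M -> D M'),
    reducing_triangulation M' /\ finite_map M' /\ covering M M' f.

Fixpoint is_walk (M : surf_map) (v : V M) (ds : list (D M)) : Prop :=
  match ds with
  | [] => True
  | d :: ds' => tail d = v /\ is_walk M (head d) ds'
  end.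

Definition walk (M : surf_map) : Type := (V M * list (D M))%type.

Inductive elem_move (M : surf_map) : walk M -> walk M -> Prop :=
  | move_spur : forall v l1 l2 d,
      is_walk M v (l1 ++ d :: rev d :: l2) -> is_walk M v (l1 ++ l2) ->
      elem_move M (v, l1 ++ d :: rev d :: l2) (v, l1 ++ l2)
  | move_face : forall v l1 l2 d,
      is_walk M v (l1 ++ l2) ->
      is_walk M v (l1 ++ d :: phi d :: phi (phi d) :: l2) ->
      elem_move M (v, l1 ++ l2) (v, l1 ++ d :: phi d :: phi (phi d) :: l2).

Definition homotopic (M : surf_map) : walk M -> walk M -> Prop :=
  clos_refl_sym_trans (walk M) (elem_move M).

(* turns: walk e e' through v = head e = tail e'.  The number of triangles
   to the left of e e' is the k with sigma^k e' = rev e, 0 <= k < deg v. *)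
Definition bad_turn (M : surf_map) (e e' : D M) : Prop :=
  exists k n, degree M e' n /\ k < n /\ Nat.iter k (@sigma M) e' = rev e /\
    (k = 0 \/ k = 1 \/ k = n - 1 \/
     (k = 2 /\ red e = true) \/ (k = n - 2 /\ red e = true)).

Fixpoint reduced (M : surf_map) (ds : list (D M)) : Prop :=
  match ds with
  | e :: ((e' :: _) as rest) => ~ bad_turn M e e' /\ reduced M rest
  | _ => True
  end.

(* Main.v *)
Require Import Defs.
From Stdlib Require Import List Arith Relations Lia Bool.
From Stdlib Require Import ClassicalEpsilon.
Import ListNotations.

Notation rv := Defs.rev.
Notation tv := Defs.tail.
Notation hv := Defs.head.

Definition it {M : surf_map} (k : nat) (x : D M) : D M := Nat.iter k (@sigma M) x.

Lemma it_S {M : surf_map} k (x : D M) : it (S k) x = sigma (it k x).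
Proof. reflexivity. Qed.
Lemma it_S' {M : surf_map} k (x : D M) : it (S k) x = it k (sigma x).
Proof. unfold it. induction k; simpl; auto. simpl in IHk. now rewrite IHk. Qed.
Lemma it_add {M : surf_map} i j (x : D M) : it (i + j) x = it i (it j x).
Proof. unfold it. now rewrite Nat.iter_add. Qed.


Ltac dRT HT := destruct HT as (Hrr & Hrn & Hss & Hsi & Hv & Hto & Hdeg & Hface & Hredphi & Hredrev).

Lemma rr {M} (HT : reducing_triangulation M) (d : D M) : rv (rv d) = d.
Proof. dRT HT. auto. Qed.
Lemma ssi {M} (HT : reducing_triangulation M) (d : D M) : sigma (sigma_inv d) = d.
Proof. dRT HT. auto. Qed.
Lemma sis {M} (HT : reducing_triangulation M) (d : D M) : sigma_inv (sigma d) = d.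
Proof. dRT HT. auto. Qed.
Lemma phi3 {M} (HT : reducing_triangulation M) (d : D M) : phi (phi (phi d)) = d.
Proof. dRT HT. destruct (Hface d) as [H _]. exact H. Qed.
Lemma phi_neq {M} (HT : reducing_triangulation M) (d : D M) : phi d <> d.
Proof. dRT HT. destruct (Hface d) as [_ H]. exact H. Qed.
Lemma red_phi {M} (HT : reducing_triangulation M) (d : D M) : red (phi d) = red d.
Proof. dRT HT. auto. Qed.
Lemma red_rev {M} (HT : reducing_triangulation M) (d : D M) : red (rv d) = negb (red d).
Proof. dRT HT. specialize (Hredrev d). destruct (red (rv d)), (red d); simpl; congruence. Qed.
Lemma tail_sigma {M} (HT : reducing_triangulation M) (d : D M) : tv (sigma d) = tv d.
Proof. dRT HT. symmetry. apply Hto. exists 1. reflexivity. Qed.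
Lemma tail_sinv {M} (HT : reducing_triangulation M) (d : D M) : tv (sigma_inv d) = tv d.
Proof. rewrite <- (tail_sigma HT). now rewrite (ssi HT). Qed.
Lemma sigma_phi {M} (HT : reducing_triangulation M) (d : D M) : sigma (phi d) = rv d.
Proof. unfold phi. apply (ssi HT). Qed.
Lemma rev_sigma {M} (HT : reducing_triangulation M) (d : D M) : rv (sigma d) = phi (phi d).
Proof.
  assert (H := phi3 HT d). set (y := phi (phi d)) in *. unfold phi at 1 in H.
  rewrite <- H. rewrite (ssi HT). apply (rr HT).
Qed.
Lemma sigma_rev {M} (HT : reducing_triangulation M) (d : D M) : sigma (rv d) = rv (phi (phi (rv d))).
Proof. rewrite <- (rev_sigma HT). now rewrite (rr HT). Qed.
Lemma red_sigma {M} (HT : reducing_triangulation M) (d : D M) : red (sigma d) = negb (red d).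
Proof.
  rewrite <- (rr HT (sigma d)). rewrite (red_rev HT), (rev_sigma HT), !(red_phi HT).
  reflexivity.
Qed.
Lemma red_sinv {M} (HT : reducing_triangulation M) (d : D M) : red (sigma_inv d) = negb (red d).
Proof. rewrite <- (ssi HT d) at 2. rewrite (red_sigma HT). now destruct (red (sigma_inv d)). Qed.
Lemma tail_phi {M} (HT : reducing_triangulation M) (d : D M) : tv (phi d) = hv d.
Proof. unfold phi, hv. apply (tail_sinv HT). Qed.
Lemma head_phi2 {M} (HT : reducing_triangulation M) (d : D M) : hv (phi (phi d)) = tv d.
Proof. unfold hv. rewrite <- (rev_sigma HT), (rr HT). apply (tail_sigma HT). Qed.
Lemma head_phi {M} (HT : reducing_triangulation M) (d : D M) : hv (phi d) = tv (phi (phi d)).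
Proof. rewrite (tail_phi HT). reflexivity. Qed.
Lemma phi_inj {M} (HT : reducing_triangulation M) (x y : D M) : phi x = phi y -> x = y.
Proof. intro H. rewrite <- (phi3 HT x), <- (phi3 HT y). now rewrite H. Qed.
Lemma sigma_inj {M} (HT : reducing_triangulation M) (x y : D M) : sigma x = sigma y -> x = y.
Proof. intro H. rewrite <- (sis HT x), <- (sis HT y). now rewrite H. Qed.
Lemma rev_inj {M} (HT : reducing_triangulation M) (x y : D M) : rv x = rv y -> x = y.
Proof. intro H. rewrite <- (rr HT x), <- (rr HT y). now rewrite H. Qed.

Lemma tail_it {M} (HT : reducing_triangulation M) k (d : D M) : tv (it k d) = tv d.
Proof. induction k; [reflexivity|]. rewrite it_S, (tail_sigma HT). auto. Qed.
Lemma red_it {M} (HT : reducing_triangulation M) k (d : D M) : red (it k d) = xorb (Nat.odd k) (red d).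
Proof.
  induction k. { simpl. now destruct (red d). }
  rewrite it_S, (red_sigma HT), IHk, Nat.odd_succ, <- Nat.negb_odd.
  destruct (Nat.odd k), (red d); reflexivity.
Qed.
Lemma it_inj {M} (HT : reducing_triangulation M) k (x y : D M) : it k x = it k y -> x = y.
Proof. induction k; [simpl; auto|]. rewrite !it_S. intro H. apply IHk. now apply (sigma_inj HT). Qed.

Definition deg {M : surf_map} (x : D M) : nat := epsilon (inhabits 0) (fun n => degree M x n).

Lemma degree_uniq {M : surf_map} (x : D M) n n' : degree M x n -> degree M x n' -> n = n'.
Proof.
  intros (H0 & H1 & H2) (H0' & H1' & H2').
  destruct (Nat.lt_trichotomy n n') as [Hl|[Hl|Hl]]; auto.
  - exfalso. apply (H2' n); auto.
  - exfalso. apply (H2 n'); auto.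
Qed.

Lemma deg_spec {M} (HT : reducing_triangulation M) (x : D M) : degree M x (deg x) /\ 8 <= deg x.
Proof.
  pose proof HT as HT'. dRT HT'. destruct (Hdeg x) as [n [Hn H8]].
  assert (E : degree M x (deg x)).
  { unfold deg. apply epsilon_spec. eauto. }
  rewrite (degree_uniq _ _ _ E Hn). auto.
Qed.

Lemma deg_ge8 {M} (HT : reducing_triangulation M) (x : D M) : 8 <= deg x.
Proof. apply (deg_spec HT). Qed.

Lemma it_deg {M} (HT : reducing_triangulation M) (x : D M) : it (deg x) x = x.
Proof. destruct (deg_spec HT x) as [(_ & H & _) _]. exact H. Qed.

Lemma it_mul {M} (HT : reducing_triangulation M) q (x : D M) : it (q * deg x) x = x.
Proof.
  induction q; [reflexivity|]. replace (S q * deg x) with (deg x + q * deg x) by lia.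
  rewrite it_add, IHq. apply (it_deg HT).
Qed.

Lemma it_mod {M} (HT : reducing_triangulation M) k (x : D M) : it k x = it (k mod deg x) x.
Proof.
  pose proof (deg_ge8 HT x).
  rewrite (Nat.div_mod_eq k (deg x)) at 1. rewrite Nat.add_comm, it_add.
  rewrite Nat.mul_comm, (it_mul HT). reflexivity.
Qed.

Lemma it_uniq {M} (HT : reducing_triangulation M) (x : D M) i j :
  i < deg x -> j < deg x -> it i x = it j x -> i = j.
Proof.
  intros Hi Hj E. destruct (deg_spec HT x) as [(_ & _ & Hmin) _].
  destruct (Nat.lt_trichotomy i j) as [Hl|[Hl|Hl]]; auto; exfalso.
  - apply (Hmin (j - i)). lia.
    change (it (j - i) x = x). apply (it_inj HT i).
    rewrite <- it_add. replace (i + (j - i)) with j by lia. auto.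
  - apply (Hmin (i - j)). lia.
    change (it (i - j) x = x). apply (it_inj HT j). rewrite <- it_add. replace (j + (i - j)) with i by lia. auto.
Qed.

Lemma deg_tail {M} (HT : reducing_triangulation M) (x y : D M) : tv x = tv y -> deg x = deg y.
Proof.
  intro E. pose proof HT as HT'. dRT HT'. apply Hto in E. destruct E as [k Ek].
  unfold it in *. change (Nat.iter k sigma x) with (it k x) in Ek.
  symmetry. apply (degree_uniq y); [apply (deg_spec HT)|].
  destruct (deg_spec HT x) as [(H0 & H1 & H2) _].
  split; [auto|split].
  - subst y. change (Nat.iter (deg x) sigma (it k x)) with (it (deg x) (it k x)).
    rewrite <- it_add, Nat.add_comm, it_add. fold (it (deg x) x) in H1. rewrite H1. reflexivity.
  - intros m Hm E. apply (H2 m Hm). subst y. change (it m x = x).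
    apply (it_inj HT k). rewrite <- it_add, Nat.add_comm, it_add. exact E.
Qed.

Lemma deg_sigma {M} (HT : reducing_triangulation M) (x : D M) : deg (sigma x) = deg x.
Proof. apply (deg_tail HT). apply (tail_sigma HT). Qed.
Lemma deg_sinv {M} (HT : reducing_triangulation M) (x : D M) : deg (sigma_inv x) = deg x.
Proof. apply (deg_tail HT). apply (tail_sinv HT). Qed.

Lemma it_back {M} (HT : reducing_triangulation M) j (x : D M) : j <= deg x -> it (deg x - j) (it j x) = x.
Proof. intro H. rewrite <- it_add. replace (deg x - j + j) with (deg x) by lia. apply (it_deg HT). Qed.

Definition turn {M : surf_map} (f a : D M) : nat :=
  epsilon (inhabits 0) (fun k => k < deg a /\ it k a = rv f).

Lemma turn_spec {M} (HT : reducing_triangulation M) (f a : D M) :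
  tv a = hv f -> turn f a < deg a /\ it (turn f a) a = rv f.
Proof.
  intro E. unfold turn. apply epsilon_spec.
  pose proof HT as HT'. dRT HT'. apply Hto in E. destruct E as [k Ek].
  exists (k mod deg a). split.
  - apply Nat.mod_upper_bound. pose proof (deg_ge8 HT a). lia.
  - rewrite <- (it_mod HT). exact Ek.
Qed.

Lemma turn_eq {M} (HT : reducing_triangulation M) (f a : D M) k :
  k < deg a -> it k a = rv f -> turn f a = k.
Proof.
  intros Hk E. assert (T : tv a = hv f).
  { unfold hv. rewrite <- E. symmetry. apply (tail_it HT). }
  destruct (turn_spec HT f a T) as [H1 H2]. apply (it_uniq HT a); auto. congruence.
Qed.

Lemma turn_neg {M} (HT : reducing_triangulation M) (f a : D M) j :
  1 <= j -> j < deg a -> it j (rv f) = a -> turn f a = deg a - j.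
Proof.
  intros H1 H2 E. apply (turn_eq HT). lia.
  assert (deg a = deg (rv f)) as Ed.
  { apply (deg_tail HT). rewrite <- E. apply (tail_it HT). }
  rewrite <- E at 2. rewrite Ed. apply (it_back HT). lia.
Qed.

Definition bad {M : surf_map} (f a : D M) : bool :=
  let n := deg a in let k := turn f a in
  (k =? 0) || (k =? 1) || (k =? n - 1) || ((k =? 2) && red f) || ((k =? n - 2) && red f).

Fixpoint step {M : surf_map} (rs : list (D M)) (a : D M) : list (D M) :=
  match rs with
  | [] => [a]
  | f :: rs' =>
      let n := deg a in let k := turn f a in
      if k =? 0 then rs'
      else if k =? 1 then step rs' (sigma f)
      else if k =? n - 1 then step rs' (sigma_inv f)
      else if (k =? 2) && red f then rv (phi a) :: step rs' (sigma f)
      else if (k =? n - 2) && red f then phi (sigma_inv a) :: step rs' (sigma_inv f)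
      else a :: f :: rs'
  end.

Fixpoint wf {M : surf_map} (v : V M) (rs : list (D M)) : Prop :=
  match rs with
  | [] => True
  | [f] => tv f = v
  | f :: ((f' :: _) as r) => tv f = hv f' /\ bad f' f = false /\ wf v r
  end.

Definition endv {M : surf_map} (v : V M) (rs : list (D M)) : V M :=
  match rs with [] => v | f :: _ => hv f end.

Ltac eqbs := repeat match goal with
  | |- context [?x =? ?y] => let E := fresh "E" in destruct (Nat.eqb_spec x y) as [E|E]
  end.

Lemma step_k0 {M} (HT : reducing_triangulation M) (f a : D M) rs :
  turn f a = 0 -> step (f :: rs) a = rs.
Proof. intro H. simpl. rewrite H. reflexivity. Qed.
Lemma step_k1 {M} (HT : reducing_triangulation M) (f a : D M) rs :
  turn f a = 1 -> step (f :: rs) a = step rs (sigma f).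
Proof. intro H. simpl. rewrite H. reflexivity. Qed.
Lemma step_kn1 {M} (HT : reducing_triangulation M) (f a : D M) rs :
  turn f a = deg a - 1 -> step (f :: rs) a = step rs (sigma_inv f).
Proof. intro H. pose proof (deg_ge8 HT a). simpl. rewrite H. eqbs; try lia. reflexivity. Qed.
Lemma step_k2r {M} (HT : reducing_triangulation M) (f a : D M) rs :
  turn f a = 2 -> red f = true -> step (f :: rs) a = rv (phi a) :: step rs (sigma f).
Proof. intros H R. pose proof (deg_ge8 HT a). simpl. rewrite H, R. eqbs; try lia. reflexivity. Qed.
Lemma step_kn2r {M} (HT : reducing_triangulation M) (f a : D M) rs :
  turn f a = deg a - 2 -> red f = true ->
  step (f :: rs) a = phi (sigma_inv a) :: step rs (sigma_inv f).
Proof. intros H R. pose proof (deg_ge8 HT a). simpl. rewrite H, R. eqbs; try lia. reflexivity. Qed.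
Lemma step_good {M} (HT : reducing_triangulation M) (f a : D M) rs :
  bad f a = false -> step (f :: rs) a = a :: f :: rs.
Proof.
  unfold bad. intro H. simpl. destruct (red f); eqbs; simpl in H; try discriminate; reflexivity.
Qed.

Lemma bad_false {M} (HT : reducing_triangulation M) (f a : D M) k :
  turn f a = k -> 2 <= k -> k <= deg a - 2 -> (k = 2 -> red f = false) -> (k = deg a - 2 -> red f = false) ->
  bad f a = false.
Proof.
  intros H H1 H2 H3 H4. pose proof (deg_ge8 HT a). unfold bad. rewrite H.
  replace (k =? 0) with false by (symmetry; apply Nat.eqb_neq; lia).
  replace (k =? 1) with false by (symmetry; apply Nat.eqb_neq; lia).
  replace (k =? deg a - 1) with false by (symmetry; apply Nat.eqb_neq; lia).
  simpl. destruct (Nat.eqb_spec k 2) as [E|E].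
  - rewrite (H3 E). replace (k =? deg a - 2) with false by (symmetry; apply Nat.eqb_neq; lia). reflexivity.
  - simpl. destruct (Nat.eqb_spec k (deg a - 2)) as [E'|E']; simpl; auto.
Qed.

Lemma bad_false_inv {M} (HT : reducing_triangulation M) (f a : D M) :
  tv a = hv f -> bad f a = false ->
  2 <= turn f a /\ turn f a <= deg a - 2 /\ (turn f a = 2 -> red f = false) /\
  (turn f a = deg a - 2 -> red f = false).
Proof.
  unfold bad. intros T H. pose proof (deg_ge8 HT a).
  destruct (turn_spec HT f a T) as [Hlt _].
  destruct (Nat.eqb_spec (turn f a) 0); simpl in H; try discriminate.
  destruct (Nat.eqb_spec (turn f a) 1); simpl in H; try discriminate.
  destruct (Nat.eqb_spec (turn f a) (deg a - 1)); simpl in H; try discriminate.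
  destruct (Nat.eqb_spec (turn f a) 2); simpl in H;
  destruct (Nat.eqb_spec (turn f a) (deg a - 2)); simpl in H; try lia;
  repeat split; intros; try lia; try (destruct (red f); simpl in H; try discriminate; reflexivity).
Qed.

Lemma red_turn {M} (HT : reducing_triangulation M) (f a : D M) :
  tv a = hv f -> red f = negb (xorb (Nat.odd (turn f a)) (red a)).
Proof.
  intro T. destruct (turn_spec HT f a T) as [_ E].
  assert (R : red (rv f) = xorb (Nat.odd (turn f a)) (red a)) by (rewrite <- E; apply (red_it HT)).
  rewrite (red_rev HT) in R. rewrite <- R. destruct (red f); reflexivity.
Qed.

Lemma turn_dec {M} (HT : reducing_triangulation M) (f' f : D M) :
  tv f = hv f' -> 1 <= turn f' f -> turn f' (sigma f) = turn f' f - 1.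
Proof.
  intros T H. destruct (turn_spec HT f' f T) as [Hlt E].
  apply (turn_eq HT). rewrite (deg_sigma HT). lia.
  rewrite <- it_S'. replace (S (turn f' f - 1)) with (turn f' f) by lia. exact E.
Qed.

Lemma turn_inc {M} (HT : reducing_triangulation M) (f' f : D M) :
  tv f = hv f' -> turn f' f + 1 < deg f -> turn f' (sigma_inv f) = turn f' f + 1.
Proof.
  intros T H. destruct (turn_spec HT f' f T) as [Hlt E].
  apply (turn_eq HT). rewrite (deg_sinv HT). lia.
  rewrite it_add. change (it 1 (sigma_inv f)) with (sigma (sigma_inv f)).
  rewrite (ssi HT). exact E.
Qed.

Definition itv {M : surf_map} (k : nat) (x : D M) : D M := Nat.iter k (@sigma_inv M) x.

Lemma itv_it {M} (HT : reducing_triangulation M) k (x : D M) : itv k (it k x) = x.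
Proof.
  revert x. induction k; intro x; [reflexivity|].
  unfold itv. rewrite it_S'. simpl. fold (itv k (it k (sigma x))). rewrite IHk. apply (sis HT).
Qed.
Lemma it_itv {M} (HT : reducing_triangulation M) k (x : D M) : it k (itv k x) = x.
Proof.
  revert x. induction k; intro x; [reflexivity|].
  rewrite it_S'. unfold itv. simpl. fold (itv k x). rewrite (ssi HT). apply IHk.
Qed.

Definition op (M : surf_map) : surf_map :=
  Map (D M) (V M) (@Defs.rev M) (@sigma_inv M) (@sigma M) (@Defs.tail M) (@red M).

Lemma id_I1 {M} (HT : reducing_triangulation M) (a : D M) : rv (sigma (rv a)) = phi (sigma_inv a).
Proof.
  assert (E : rv a = phi (phi (sigma_inv a))) by (rewrite <- (rev_sigma HT), (ssi HT); reflexivity).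
  rewrite (rev_sigma HT), E, (phi3 HT). reflexivity.
Qed.
Lemma id_I2 {M} (HT : reducing_triangulation M) (a : D M) : sigma (rv (sigma a)) = rv (phi a).
Proof. rewrite (rev_sigma HT), (sigma_phi HT). reflexivity. Qed.

Lemma opP3 {M} (HT : reducing_triangulation M) (d : D M) : sigma (rv (sigma (rv (sigma (rv d))))) = d.
Proof.
  rewrite (sigma_rev HT d), (rr HT). rewrite (sigma_phi HT), (rr HT), (sigma_phi HT). apply (rr HT).
Qed.
Lemma opP_neq {M} (HT : reducing_triangulation M) (d : D M) : sigma (rv d) <> d.
Proof.
  intro E. rewrite (sigma_rev HT) in E. apply (f_equal rv) in E. rewrite (rr HT) in E.
  apply (f_equal phi) in E. rewrite (phi3 HT) in E. apply (phi_neq HT (rv d)). auto.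
Qed.

Lemma RT_op {M} (HT : reducing_triangulation M) : reducing_triangulation (op M).
Proof.
  pose proof HT as HT'. dRT HT'.
  unfold reducing_triangulation; simpl.
  split; [exact Hrr|]. split; [exact Hrn|]. split; [exact Hsi|]. split; [exact Hss|].
  split; [exact Hv|].
  split.
  { intros d d'. split.
    - intro E. apply Hto in E. destruct E as [k Ek]. change (it k d = d') in Ek.
      rewrite (it_mod HT) in Ek. set (k' := k mod deg d) in *.
      assert (k' < deg d) by (apply Nat.mod_upper_bound; pose proof (deg_ge8 HT d); lia).
      exists (deg d - k'). change (itv (deg d - k') d = d').
      assert (E2 : it (deg d - k') (it k' d) = d) by (apply (it_back HT); lia).
      set (n := deg d) in *. rewrite <- Ek.
      transitivity (itv (n - k') (it (n - k') (it k' d))).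
      { rewrite E2. reflexivity. }
      apply (itv_it HT).
    - intros [k Ek]. change (itv k d = d') in Ek. subst d'.
      transitivity (tv (it k (itv k d))). { rewrite (it_itv HT). reflexivity. }
      apply (tail_it HT). }
  split.
  { intro d. exists (deg d). split; [|apply (deg_ge8 HT)].
    destruct (deg_spec HT d) as [(H0 & H1 & H2) _]. change (it (deg d) d = d) in H1. split; [auto|split].
    - change (itv (deg d) d = d). transitivity (itv (deg d) (it (deg d) d)).
      { rewrite H1. reflexivity. } apply (itv_it HT).
    - intros m Hm E. change (itv m d = d) in E. apply (H2 m Hm). change (it m d = d).
      transitivity (it m (itv m d)). { rewrite E. reflexivity. } apply (it_itv HT). }
  split.
  { intro d. split.
    - change (sigma (rv (sigma (rv (sigma (rv d))))) = d). apply opP3. exact HT.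
    - change (sigma (rv d) <> d). apply opP_neq. exact HT. }
  split.
  { intro d. change (red (sigma (rv d)) = red d). rewrite (red_sigma HT), (red_rev HT).
    destruct (red d); reflexivity. }
  exact Hredrev.
Qed.

Lemma degree_op {M} (HT : reducing_triangulation M) (x : D M) : degree (op M) x (deg x).
Proof.
  destruct (deg_spec HT x) as [(H0 & H1 & H2) _]. change (it (deg x) x = x) in H1. split; [auto|split].
  - change (itv (deg x) x = x). transitivity (itv (deg x) (it (deg x) x)).
    { rewrite H1. reflexivity. } apply (itv_it HT).
  - intros m Hm E. change (itv m x = x) in E. apply (H2 m Hm). change (it m x = x).
    transitivity (it m (itv m x)). { rewrite E. reflexivity. } apply (it_itv HT).
Qed.

Lemma deg_op {M} (HT : reducing_triangulation M) (x : D M) : @deg (op M) x = deg x.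
Proof.
  apply (degree_uniq (M := op M) x). apply (deg_spec (RT_op HT)). apply (degree_op HT).
Qed.

Lemma turn_op {M} (HT : reducing_triangulation M) (f a : D M) : tv a = hv f ->
  @turn (op M) f a = if turn f a =? 0 then 0 else deg a - turn f a.
Proof.
  intro T. destruct (turn_spec HT f a T) as [Hlt E]. pose proof (deg_ge8 HT a).
  destruct (Nat.eqb_spec (turn f a) 0) as [Z|Z].
  - apply (turn_eq (RT_op HT)). rewrite (deg_op HT). lia.
    change (a = rv f). rewrite Z in E. exact E.
  - apply (turn_eq (RT_op HT)). rewrite (deg_op HT). lia.
    change (itv (deg a - turn f a) a = rv f).
    assert (E2 : it (deg a - turn f a) (rv f) = a) by (rewrite <- E; apply (it_back HT); lia).
    transitivity (itv (deg a - turn f a) (it (deg a - turn f a) (rv f))).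
    { rewrite E2. reflexivity. } apply (itv_it HT).
Qed.

Lemma bad_true_cases {M} (f a : D M) : bad f a = true ->
  turn f a = 0 \/ turn f a = 1 \/ turn f a = deg a - 1 \/ (turn f a = 2 /\ red f = true) \/
  (turn f a = deg a - 2 /\ red f = true).
Proof.
  unfold bad. intro H. repeat rewrite orb_true_iff in H. repeat rewrite andb_true_iff in H.
  repeat rewrite Nat.eqb_eq in H. tauto.
Qed.

Lemma bad_op {M} (HT : reducing_triangulation M) (f a : D M) : tv a = hv f ->
  @bad (op M) f a = bad f a.
Proof.
  intro T. unfold bad. rewrite (turn_op HT f a T), (deg_op HT). change (@red (op M) f) with (red f).
  destruct (turn_spec HT f a T) as [Hlt _]. pose proof (deg_ge8 HT a).
  set (k := turn f a) in *. set (n := deg a) in *.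
  destruct (Nat.eqb_spec k 0) as [Z|Z]. { simpl. reflexivity. }
  assert (e1 : (n - k =? 0) = false) by (apply Nat.eqb_neq; lia).
  assert (e2 : (n - k =? 1) = (k =? n - 1)) by (destruct (Nat.eqb_spec (n-k) 1), (Nat.eqb_spec k (n-1)); auto; lia).
  assert (e3 : (n - k =? n - 1) = (k =? 1)) by (destruct (Nat.eqb_spec (n-k) (n-1)), (Nat.eqb_spec k 1); auto; lia).
  assert (e4 : (n - k =? 2) = (k =? n - 2)) by (destruct (Nat.eqb_spec (n-k) 2), (Nat.eqb_spec k (n-2)); auto; lia).
  assert (e5 : (n - k =? n - 2) = (k =? 2)) by (destruct (Nat.eqb_spec (n-k) (n-2)), (Nat.eqb_spec k 2); auto; lia).
  rewrite e1, e2, e3, e4, e5. simpl.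
  destruct (k =? n - 1), (k =? 1), (k =? n - 2), (k =? 2), (red f); reflexivity.
Qed.

Lemma wf_cons {M} (v : V M) f rs : wf v (f :: rs) -> wf v rs /\ tv f = endv v rs.
Proof. destruct rs as [|f' rs]; simpl; [auto|]. intros (A & B & C). auto. Qed.

Lemma step_op {M} (HT : reducing_triangulation M) (v : V M) rs a :
  wf v rs -> tv a = endv v rs -> @step (op M) rs a = step rs a.
Proof.
  revert a. induction rs as [|f rs' IH]; intros a W T; [reflexivity|].
  destruct (wf_cons v f rs' W) as [W' T']. simpl in T.
  pose proof (RT_op HT) as HTo.
  assert (To := turn_op HT f a T). pose proof (deg_ge8 HT a).
  destruct (turn_spec HT f a T) as [Hlt _].
  destruct (bad f a) eqn:B.
  - apply bad_true_cases in B. destruct B as [K|[K|[K|[[K R]|[K R]]]]].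
    + rewrite (step_k0 HT _ _ _ K). apply (step_k0 HTo). rewrite To, K. reflexivity.
    + rewrite (step_k1 HT _ _ _ K). rewrite (step_kn1 HTo).
      * apply IH; auto. change (tv (sigma f) = endv v rs'). rewrite (tail_sigma HT). auto.
      * rewrite To, K, (deg_op HT). simpl. reflexivity.
    + rewrite (step_kn1 HT _ _ _ K). rewrite (step_k1 HTo).
      * apply IH; auto. change (tv (sigma_inv f) = endv v rs'). rewrite (tail_sinv HT). auto.
      * rewrite To, K. destruct (Nat.eqb_spec (deg a - 1) 0); lia.
    + rewrite (step_k2r HT _ _ _ K R). rewrite (step_kn2r HTo).
      * change (@phi (op M) (@sigma_inv (op M) a)) with (sigma (rv (sigma a))).
        rewrite (id_I2 HT). f_equal. apply IH; auto.
        change (tv (sigma f) = endv v rs'). rewrite (tail_sigma HT). auto.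
      * rewrite To, K, (deg_op HT). simpl. reflexivity.
      * exact R.
    + rewrite (step_kn2r HT _ _ _ K R). rewrite (step_k2r HTo).
      * change (@Defs.rev (op M) (@phi (op M) a)) with (rv (sigma (rv a))).
        rewrite (id_I1 HT). f_equal. apply IH; auto.
        change (tv (sigma_inv f) = endv v rs'). rewrite (tail_sinv HT). auto.
      * rewrite To, K. destruct (Nat.eqb_spec (deg a - 2) 0); lia.
      * exact R.
  - rewrite (step_good HT _ _ _ B). apply (step_good HTo). rewrite (bad_op HT f a T). exact B.
Qed.

Lemma wf_op {M} (HT : reducing_triangulation M) (v : V M) rs : @wf (op M) v rs <-> wf v rs.
Proof.
  induction rs as [|f rs IH]; [simpl; tauto|].
  destruct rs as [|f' rs]; [simpl; tauto|].
  cbn -[bad wf] in *. fold (@wf M v (f' :: rs)) in *. fold (@wf (op M) v (f' :: rs)) in *.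
  split; intros (A & B & C); (split; [auto|split; [|apply IH; auto]]).
  - rewrite <- (bad_op HT); auto.
  - rewrite (bad_op HT); auto.
Qed.

Lemma dec_nonrec {M} (HT : reducing_triangulation M) (v : V M) f rs :
  wf v (f :: rs) -> red f = false -> step rs (sigma f) = sigma f :: rs.
Proof.
  destruct rs as [|f' r]; [reflexivity|]. intros (T & B & W') Rf.
  destruct (bad_false_inv HT f' f T B) as (B1 & B2 & B3 & B4).
  pose proof (red_turn HT f' f T) as Rt. rewrite Rf in Rt.
  apply (step_good HT). apply (bad_false HT f' (sigma f) (turn f' f - 1)).
  - apply (turn_dec HT); [auto|lia].
  - destruct (Nat.eqb_spec (turn f' f) 2) as [E|E]; [|lia].
    rewrite E in Rt. rewrite (B3 E) in Rt. discriminate.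
  - rewrite (deg_sigma HT). lia.
  - intro E. replace (turn f' f) with 3 in Rt by lia. exact Rt.
  - rewrite (deg_sigma HT). lia.
Qed.

Lemma last_dec {M} (HT : reducing_triangulation M) (v : V M) f rs :
  wf v (f :: rs) -> exists l r, step rs (sigma f) = l :: r /\
    (l = sigma f \/ rv l = sigma_inv (rv (sigma f))).
Proof.
  intro W. destruct (red f) eqn:Rf.
  2:{ rewrite (dec_nonrec HT v f rs W Rf). eauto. }
  destruct rs as [|f' r]; [simpl; eauto|].
  destruct W as (T & B & W').
  destruct (bad_false_inv HT f' f T B) as (B1 & B2 & B3 & B4).
  pose proof (red_turn HT f' f T) as Rt. rewrite Rf in Rt.
  assert (Td : turn f' (sigma f) = turn f' f - 1) by (apply (turn_dec HT); [auto|lia]).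
  destruct (Nat.eqb_spec (turn f' f) 2) as [E2|E2].
  {
    rewrite (step_k1 HT f' (sigma f) r) by lia.
    rewrite (dec_nonrec HT v f' r W') by auto. do 2 eexists. split; [reflexivity|right].
    destruct (turn_spec HT f' f T) as [_ E]. rewrite E2 in E.
    change (sigma (sigma f) = rv f') in E.
    rewrite (rev_sigma HT). assert (P : phi f' = sigma f) by (unfold phi; rewrite <- E; apply (sis HT)).
    rewrite P. reflexivity. }
  destruct (Nat.eqb_spec (turn f' f) 3) as [E3|E3].
  { destruct (red f') eqn:Rf'.
    - rewrite (step_k2r HT f' (sigma f) r) by (auto; lia). do 2 eexists. split; [reflexivity|right].
      rewrite (rr HT). reflexivity.
    - rewrite (step_good HT). eauto. apply (bad_false HT _ _ (turn f' f - 1)); auto; try lia;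
      rewrite (deg_sigma HT); lia. }
  rewrite (step_good HT). eauto. apply (bad_false HT _ _ (turn f' f - 1)); auto; try lia;
  rewrite (deg_sigma HT); lia.
Qed.

Lemma inc_nonrec {M} (HT : reducing_triangulation M) (v : V M) f rs :
  wf v (f :: rs) -> red f = false -> step rs (sigma_inv f) = sigma_inv f :: rs.
Proof.
  intros W R. destruct (wf_cons v f rs W) as [W' T'].
  rewrite <- (step_op HT v); auto. 2:{ rewrite (tail_sinv HT). auto. }
  apply (dec_nonrec (RT_op HT) v f rs). apply (wf_op HT). exact W. exact R.
Qed.

Lemma last_inc {M} (HT : reducing_triangulation M) (v : V M) f rs :
  wf v (f :: rs) -> exists l r, step rs (sigma_inv f) = l :: r /\
    (l = sigma_inv f \/ rv l = sigma (rv (sigma_inv f))).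
Proof.
  intros W. destruct (wf_cons v f rs W) as [W' T'].
  rewrite <- (step_op HT v); auto. 2:{ rewrite (tail_sinv HT). auto. }
  apply (last_dec (RT_op HT) v f rs). apply (wf_op HT). exact W.
Qed.

Lemma it_neg_eq {M} (HT : reducing_triangulation M) (a f : D M) j :
  j <= deg a -> it (deg a - j) a = rv f -> it j (rv f) = a.
Proof. intros H E. rewrite <- E, <- it_add. replace (j + (deg a - j)) with (deg a) by lia. apply (it_deg HT). Qed.

Lemma hv_sigma_phi {M} (HT : reducing_triangulation M) (x : D M) : hv (sigma x) = hv (phi x).
Proof. unfold hv. rewrite (rev_sigma HT). apply (tail_phi HT (phi x)). Qed.

Lemma wf_cons2 {M} (v : V M) x l r : tv x = hv l -> bad l x = false -> wf v (l :: r) -> wf v (x :: l :: r).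
Proof. intros A B C. exact (conj A (conj B C)). Qed.

Lemma SI {M} (HT : reducing_triangulation M) (v : V M) rs a :
  wf v rs -> tv a = endv v rs -> wf v (step rs a) /\ endv v (step rs a) = hv a.
Proof.
  revert a. induction rs as [|f rs' IH]; intros a W T.
  { simpl. simpl in T. auto. }
  destruct (wf_cons v f rs' W) as [W' T']. simpl in T.
  destruct (turn_spec HT f a T) as [Hlt Ea]. pose proof (deg_ge8 HT a).
  destruct (bad f a) eqn:B.
  - apply bad_true_cases in B. destruct B as [K|[K|[K|[[K R]|[K R]]]]].
    + rewrite (step_k0 HT _ _ _ K). split; auto. rewrite K in Ea. simpl in Ea. subst a.
      change (endv v rs' = tv (rv (rv f))). rewrite (rr HT). auto.
    + rewrite (step_k1 HT _ _ _ K).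
      destruct (IH (sigma f)) as [W1 E1]; auto. { rewrite (tail_sigma HT). auto. }
      split; auto. rewrite E1. rewrite K in Ea. change (sigma a = rv f) in Ea.
      rewrite (hv_sigma_phi HT). replace (phi f) with a by (unfold phi; rewrite <- Ea; symmetry; apply (sis HT)).
      reflexivity.
    + rewrite (step_kn1 HT _ _ _ K).
      destruct (IH (sigma_inv f)) as [W1 E1]; auto. { rewrite (tail_sinv HT). auto. }
      split; auto. rewrite E1. rewrite K in Ea. apply (it_neg_eq HT) in Ea; [|lia].
      change (sigma (rv f) = a) in Ea.
      unfold hv. rewrite <- Ea, (rev_sigma HT).
      replace (sigma_inv f) with (phi (rv f)) by (unfold phi; rewrite (rr HT); auto).
      symmetry. apply (tail_phi HT (phi (rv f))).
    + rewrite (step_k2r HT _ _ _ K R).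
      destruct (IH (sigma f)) as [W1 E1]; auto. { rewrite (tail_sigma HT). auto. }
      rewrite K in Ea. change (sigma (sigma a) = rv f) in Ea.
      assert (Pf : phi f = sigma a) by (unfold phi; rewrite <- Ea; apply (sis HT)).
      destruct (last_dec HT v f rs' W) as (l & r & El & Hl).
      rewrite El in W1, E1 |- *. simpl in E1.
      split.
      * apply wf_cons2; auto.
        { rewrite E1, (hv_sigma_phi HT), Pf, (hv_sigma_phi HT a). reflexivity. }
        assert (E2 : it 2 (rv (sigma f)) = rv (phi a)).
        { change (sigma (sigma (rv (sigma f))) = rv (phi a)).
          rewrite (rev_sigma HT), Pf, (sigma_phi HT). apply (id_I2 HT). }
        pose proof (deg_ge8 HT (rv (phi a))).
        assert (Dx : deg (rv (phi a)) = deg (rv (sigma f))).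
        { apply (deg_tail HT). rewrite <- E2. apply (tail_it HT). }
        destruct Hl as [Hl|Hl].
        -- subst l. apply (bad_false HT _ _ (deg (rv (phi a)) - 2)); try lia.
           ++ apply (turn_neg HT); auto; lia.
           ++ intros _. rewrite (red_sigma HT), R. reflexivity.
        -- apply (bad_false HT _ _ (deg (rv (phi a)) - 3)); try lia.
           apply (turn_neg HT); try lia.
           change (sigma (sigma (sigma (rv l))) = rv (phi a)). rewrite Hl, (ssi HT). exact E2.
      * simpl. unfold hv at 1. rewrite (rr HT). apply (tail_phi HT).
    + rewrite (step_kn2r HT _ _ _ K R).
      destruct (IH (sigma_inv f)) as [W1 E1]; auto. { rewrite (tail_sinv HT). auto. }
      rewrite K in Ea. apply (it_neg_eq HT) in Ea; [|lia].
      change (sigma (sigma (rv f)) = a) in Ea.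
      assert (Ec : sigma_inv a = sigma (rv f)) by (rewrite <- Ea; apply (sis HT)).
      assert (Ef : sigma_inv f = phi (rv f)) by (unfold phi; rewrite (rr HT); auto).
      destruct (last_inc HT v f rs' W) as (l & r & El & Hl).
      rewrite El in W1, E1 |- *. simpl in E1.
      split.
      * apply wf_cons2; auto.
        { rewrite E1, (tail_phi HT), Ec, Ef. unfold hv. rewrite (rev_sigma HT). 
          apply (tail_phi HT (phi (rv f))). }
        assert (E2 : it 2 (phi (sigma_inv a)) = rv (sigma_inv f)).
        { change (sigma (sigma (phi (sigma_inv a))) = rv (sigma_inv f)).
          rewrite (sigma_phi HT), Ec, (id_I2 HT), Ef. reflexivity. }
        pose proof (deg_ge8 HT (phi (sigma_inv a))).
        destruct Hl as [Hl|Hl].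
        -- subst l. apply (bad_false HT _ _ 2); try lia.
           ++ apply (turn_eq HT); auto; lia.
           ++ intros _. rewrite (red_sinv HT), R. reflexivity.
        -- apply (bad_false HT _ _ 3); try lia.
           apply (turn_eq HT); try lia.
           change (sigma (it 2 (phi (sigma_inv a))) = rv l). rewrite E2, Hl. reflexivity.
      * simpl. rewrite (head_phi HT), <- (rev_sigma HT), (ssi HT). reflexivity.
  - rewrite (step_good HT _ _ _ B). split; [|reflexivity]. apply wf_cons2; auto.
Qed.

Lemma step_self {M} (HT : reducing_triangulation M) (v : V M) f rs :
  wf v (f :: rs) -> step rs f = f :: rs.
Proof.
  destruct rs as [|f' r]; [reflexivity|]. intros (T & B & _). apply (step_good HT). exact B.
Qed.

Lemma turn_0 {M} (HT : reducing_triangulation M) (f : D M) : turn f (rv f) = 0.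
Proof. apply (turn_eq HT). pose proof (deg_ge8 HT (rv f)). lia. reflexivity. Qed.
Lemma turn_1 {M} (HT : reducing_triangulation M) (a : D M) : turn a (phi a) = 1.
Proof. apply (turn_eq HT). pose proof (deg_ge8 HT (phi a)). lia. apply (sigma_phi HT). Qed.

Definition TRprop {M : surf_map} (v : V M) (rs : list (D M)) : Prop :=
  forall b, tv b = endv v rs -> step (step rs b) (sigma (rv b)) = step rs (sigma_inv b).
Definition TLprop {M : surf_map} (v : V M) (rs : list (D M)) : Prop :=
  forall b, tv b = endv v rs -> step (step rs b) (phi b) = step rs (sigma b).
Definition Cprop {M : surf_map} (v : V M) (rs : list (D M)) : Prop :=
  forall b, tv b = endv v rs -> step (step rs b) (rv b) = rs.

Lemma C_left {M} (HT : reducing_triangulation M) (v : V M) f rs a :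
  wf v (f :: rs) -> tv a = hv f -> TRprop v rs ->
  (turn f a = 1 \/ (turn f a = 2 /\ red f = true)) ->
  step (step (f :: rs) a) (rv a) = f :: rs.
Proof.
  intros W T TR K. destruct (wf_cons v f rs W) as [W' T'].
  destruct (turn_spec HT f a T) as [Hlt Ea].
  destruct K as [K|[K R]].
  - rewrite (step_k1 HT _ _ _ K). rewrite K in Ea. change (sigma a = rv f) in Ea.
    assert (Pf : phi f = a) by (unfold phi; rewrite <- Ea; apply (sis HT)).
    replace (rv a) with (sigma (rv (sigma f))).
    + rewrite TR. rewrite (sis HT). apply (step_self HT v). exact W.
      rewrite (tail_sigma HT). auto.
    + rewrite (rev_sigma HT), Pf. apply (sigma_phi HT).
  - rewrite (step_k2r HT _ _ _ K R). rewrite K in Ea. change (sigma (sigma a) = rv f) in Ea.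
    assert (Pf : phi f = sigma a) by (unfold phi; rewrite <- Ea; apply (sis HT)).
    rewrite (step_kn1 HT).
    + replace (sigma_inv (rv (phi a))) with (sigma (rv (sigma f))).
      * rewrite TR. rewrite (sis HT). apply (step_self HT v). exact W.
        rewrite (tail_sigma HT). auto.
      * rewrite (id_I2 HT), Pf, (rev_sigma HT). reflexivity.
    + apply (turn_neg HT); try lia. pose proof (deg_ge8 HT (rv a)); lia.
      rewrite (rr HT). apply (sigma_phi HT).
Qed.

Lemma TR_of_TLop {M} (HT : reducing_triangulation M) (v : V M) rs :
  wf v rs -> @TLprop (op M) v rs -> TRprop v rs.
Proof.
  intros W TL b Tb. specialize (TL b Tb).
  destruct (SI HT v rs b W Tb) as [W1 E1].
  rewrite (step_op HT v rs b W Tb) in TL.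
  rewrite (step_op HT v (step rs b)) in TL; auto.
  2:{ rewrite E1. change (tv (sigma (rv b)) = tv (rv b)). apply (tail_sigma HT). }
  rewrite (step_op HT v rs) in TL; auto. change (tv (sigma_inv b) = endv v rs). rewrite (tail_sinv HT). auto.
Qed.

Lemma TRop_of_TL {M} (HT : reducing_triangulation M) (v : V M) rs :
  wf v rs -> TLprop v rs -> @TRprop (op M) v rs.
Proof.
  intros W TL b Tb. specialize (TL b Tb).
  destruct (SI HT v rs b W Tb) as [W1 E1].
  change (@step (op M) (@step (op M) rs b) (@phi M b) = @step (op M) rs (@sigma M b)).
  rewrite (step_op HT v rs b W Tb).
  rewrite (step_op HT v (step rs b)); auto.
  2:{ rewrite E1. apply (tail_phi HT). }
  rewrite (step_op HT v rs); auto. rewrite (tail_sigma HT). auto.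
Qed.

Lemma C_right {M} (HT : reducing_triangulation M) (v : V M) f rs a :
  wf v (f :: rs) -> tv a = hv f -> TLprop v rs ->
  (turn f a = deg a - 1 \/ (turn f a = deg a - 2 /\ red f = true)) ->
  step (step (f :: rs) a) (rv a) = f :: rs.
Proof.
  intros W T TL K. pose proof (RT_op HT) as HTo. destruct (wf_cons v f rs W) as [W' T'].
  pose proof (deg_ge8 HT a).
  assert (Ko : @turn (op M) f a = 1 \/ (@turn (op M) f a = 2 /\ @red (op M) f = true)).
  { rewrite (turn_op HT f a T). destruct K as [K|[K R]]; rewrite K.
    - left. destruct (Nat.eqb_spec (deg a - 1) 0); lia.
    - right. split; [|exact R]. destruct (Nat.eqb_spec (deg a - 2) 0); lia. }
  pose proof (C_left HTo v f rs a (proj2 (wf_op HT v _) W) T (TRop_of_TL HT v rs W' TL) Ko) as C.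
  change (@step (op M) (@step (op M) (@cons (D M) f rs) a) (@Defs.rev M a) = @cons (D M) f rs) in C.
  rewrite (step_op HT v (f :: rs) a W T) in C.
  destruct (SI HT v (f :: rs) a W T) as [W1 E1].
  rewrite (step_op HT v (step (f :: rs) a)) in C; auto.
Qed.

Lemma TL_cons {M} (HT : reducing_triangulation M) (v : V M) f rs a :
  wf v (f :: rs) -> tv a = hv f -> Cprop v rs -> TLprop v rs ->
  step (step (f :: rs) a) (phi a) = step (f :: rs) (sigma a).
Proof.
  intros W T C TL. destruct (wf_cons v f rs W) as [W' T'].
  destruct (turn_spec HT f a T) as [Hlt Ea]. pose proof (deg_ge8 HT a).
  assert (Tsa : tv (sigma a) = hv f) by (rewrite (tail_sigma HT); auto).
  destruct (bad f a) eqn:B.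
  2:{ rewrite (step_good HT _ _ _ B). apply (step_k1 HT). apply (turn_1 HT). }
  apply bad_true_cases in B. destruct B as [K|[K|[K|[[K R]|[K R]]]]].
  -
    rewrite (step_k0 HT _ _ _ K). rewrite K in Ea. simpl in Ea. subst a.
    rewrite (step_kn1 HT).
    + unfold phi. rewrite (rr HT). reflexivity.
    + apply (turn_neg HT); try lia. rewrite (deg_sigma HT). lia. reflexivity.
  -
    rewrite (step_k1 HT _ _ _ K). rewrite K in Ea. change (sigma a = rv f) in Ea.
    assert (Pf : phi f = a) by (unfold phi; rewrite <- Ea; apply (sis HT)).
    replace (phi a) with (rv (sigma f)) by (rewrite (rev_sigma HT), Pf; reflexivity).
    rewrite C. 2:{ rewrite (tail_sigma HT). auto. }
    symmetry. apply (step_k0 HT). apply (turn_eq HT). rewrite (deg_sigma HT); lia. exact Ea.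
  -
    rewrite (step_kn1 HT _ _ _ K). rewrite K in Ea. apply (it_neg_eq HT) in Ea; [|lia].
    change (sigma (rv f) = a) in Ea.
    assert (Ef : sigma_inv f = phi (rv f)) by (unfold phi; rewrite (rr HT); auto).
    assert (Ks : turn f (sigma a) = deg (sigma a) - 2).
    { apply (turn_neg HT); try lia. rewrite (deg_sigma HT). lia. simpl. rewrite Ea. reflexivity. }
    assert (E2 : it 2 (phi a) = rv (sigma_inv f)).
    { change (sigma (sigma (phi a)) = rv (sigma_inv f)).
      rewrite (sigma_phi HT), <- Ea, (id_I2 HT), Ef. reflexivity. }
    pose proof (deg_ge8 HT (phi a)).
    destruct (red f) eqn:Rf.
    + rewrite (step_kn2r HT _ _ _ Ks Rf). rewrite (sis HT).
      destruct (last_inc HT v f rs W) as (l & r & El & Hl). rewrite El.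
      apply (step_good HT). destruct Hl as [Hl|Hl].
      * subst l. apply (bad_false HT _ _ 2); try lia.
        -- apply (turn_eq HT); auto; lia.
        -- intros _. rewrite (red_sinv HT), Rf. reflexivity.
      * apply (bad_false HT _ _ 3); try lia.
        apply (turn_eq HT); try lia.
        change (sigma (it 2 (phi a)) = rv l). rewrite E2, Hl. reflexivity.
    + rewrite (inc_nonrec HT v f rs W Rf).
      rewrite (step_good HT f).
      2:{ apply (bad_false HT _ _ (deg (sigma a) - 2)); auto; rewrite (deg_sigma HT); try lia. }
      rewrite (step_k2r HT).
      * rewrite (ssi HT), (step_self HT v f rs W). f_equal.
        rewrite <- (rev_sigma HT), (rr HT). reflexivity.
      * apply (turn_eq HT); auto; lia.
      * rewrite (red_sinv HT), Rf. reflexivity.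
  -
    rewrite (step_k2r HT _ _ _ K R). rewrite (step_k0 HT).
    + symmetry. apply (step_k1 HT). apply (turn_eq HT). rewrite (deg_sigma HT). lia.
      rewrite K in Ea. exact Ea.
    + apply (turn_eq HT). pose proof (deg_ge8 HT (phi a)). lia. simpl. rewrite (rr HT). reflexivity.
  -
    rewrite (step_kn2r HT _ _ _ K R). rewrite K in Ea. apply (it_neg_eq HT) in Ea; [|lia].
    change (sigma (sigma (rv f)) = a) in Ea.
    assert (Ec : sigma_inv a = sigma (rv f)) by (rewrite <- Ea; apply (sis HT)).
    assert (Ef : sigma_inv f = phi (rv f)) by (unfold phi; rewrite (rr HT); auto).
    pose proof (deg_ge8 HT (phi a)).
    rewrite (step_k2r HT).
    + rewrite (step_good HT f).
      2:{ apply (bad_false HT _ _ (deg (sigma a) - 3)); try (rewrite (deg_sigma HT); lia).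
          apply (turn_neg HT); try (rewrite (deg_sigma HT); lia).
          lia. change (sigma (sigma (sigma (rv f))) = sigma a). rewrite Ea. reflexivity. }
      f_equal. { rewrite <- (rev_sigma HT), (rr HT). reflexivity. }
      rewrite (sigma_phi HT), Ec.
      replace (rv (sigma (rv f))) with (phi (sigma_inv f)) by (rewrite Ef, (rev_sigma HT); reflexivity).
      rewrite TL. 2:{ rewrite (tail_sinv HT). auto. }
      rewrite (ssi HT). apply (step_self HT v f rs W).
    + apply (turn_eq HT); try lia.
      change (sigma (sigma (phi a)) = rv (phi (sigma_inv a))).
      rewrite (sigma_phi HT), <- (id_I2 HT), (ssi HT). reflexivity.
    + rewrite (red_phi HT), Ec, (red_sigma HT), (red_rev HT), R. reflexivity.
Qed.

Lemma core_nil {M} (HT : reducing_triangulation M) (v : V M) : Cprop v [] /\ TLprop v [].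
Proof.
  split; intros b _.
  - change (step [b] (rv b) = []). apply (step_k0 HT). apply (turn_0 HT).
  - change (step [b] (phi b) = [sigma b]). rewrite (step_k1 HT). reflexivity. apply (turn_1 HT).
Qed.

Lemma core : forall n (M : surf_map) (HT : reducing_triangulation M) (rs : list (D M)) (v : V M),
  length rs <= n -> wf v rs -> Cprop v rs /\ TLprop v rs.
Proof.
  induction n; intros M HT rs v Hl W; (destruct rs as [|f rs']; [apply (core_nil HT)|]).
  { simpl in Hl. lia. }
  simpl in Hl. assert (Hl' : length rs' <= n) by lia.
  destruct (wf_cons v f rs' W) as [W' T'].
  destruct (IHn M HT rs' v Hl' W') as [C TL].
  assert (TR : TRprop v rs').
  { apply (TR_of_TLop HT v rs' W'). apply (IHn (op M) (RT_op HT) rs' v Hl'). apply (wf_op HT). exact W'. }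
  split.
  - intros b T. simpl in T.
    destruct (turn_spec HT f b T) as [Hlt Eb].
    destruct (bad f b) eqn:B.
    + apply bad_true_cases in B. destruct B as [K|[K|[K|[[K R]|[K R]]]]].
      * rewrite (step_k0 HT _ _ _ K). rewrite K in Eb. simpl in Eb. subst b.
        rewrite (rr HT). apply (step_self HT v f rs' W).
      * apply (C_left HT v f rs' b W T TR). auto.
      * apply (C_right HT v f rs' b W T TL). auto.
      * apply (C_left HT v f rs' b W T TR). auto.
      * apply (C_right HT v f rs' b W T TL). auto.
    + rewrite (step_good HT _ _ _ B). apply (step_k0 HT). apply (turn_0 HT).
  - intros b T. apply (TL_cons HT v f rs' b W T C TL).
Qed.

Fixpoint wend {M : surf_map} (v : V M) (l : list (D M)) : V M :=
  match l with [] => v | d :: l' => wend (hv d) l' end.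

Lemma is_walk_app {M : surf_map} (v : V M) l1 l2 :
  is_walk M v (l1 ++ l2) <-> is_walk M v l1 /\ is_walk M (wend v l1) l2.
Proof.
  revert v. induction l1 as [|d l1 IH]; intro v; simpl; [tauto|].
  rewrite IH. tauto.
Qed.

Lemma fold_inv {M} (HT : reducing_triangulation M) (v : V M) l : forall rs u,
  wf v rs -> endv v rs = u -> is_walk M u l ->
  wf v (fold_left step l rs) /\ endv v (fold_left step l rs) = wend u l.
Proof.
  induction l as [|d l IH]; intros rs u W E Hw; simpl; [auto|].
  destruct Hw as [Td Hw].
  destruct (SI HT v rs d W) as [W1 E1]; [congruence|].
  apply IH; auto.
Qed.

Definition NF {M : surf_map} (l : list (D M)) : list (D M) := fold_left step l [].

Lemma NF_inv {M} (HT : reducing_triangulation M) (v : V M) l :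
  is_walk M v l -> wf v (NF l) /\ endv v (NF l) = wend v l.
Proof. intro H. apply (fold_inv HT v l [] v); simpl; auto. Qed.

Lemma elem_move_NF {M} (HT : reducing_triangulation M) (p q : walk M) :
  elem_move M p q -> NF (snd p) = NF (snd q).
Proof.
  intro H. destruct H as [v l1 l2 d H1 H2|v l1 l2 d H1 H2]; simpl; unfold NF; rewrite !fold_left_app.
  - apply is_walk_app in H1. destruct H1 as [H1 H3]. destruct H3 as [Td _].
    destruct (NF_inv HT v l1 H1) as [W E].
    simpl. f_equal. unfold NF in *.
    destruct (core (length (fold_left step l1 [])) M HT _ v (le_n _) W) as [C _].
    apply C. rewrite E. auto.
  - apply is_walk_app in H2. destruct H2 as [H2 H3]. destruct H3 as [Td _].
    destruct (NF_inv HT v l1 H2) as [W E].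
    simpl. f_equal. unfold NF in *.
    destruct (core (length (fold_left step l1 [])) M HT _ v (le_n _) W) as [C TL].
    rewrite TL by (rewrite E; auto).
    rewrite <- (rev_sigma HT). symmetry. apply C. rewrite E, (tail_sigma HT). auto.
Qed.

Lemma NF_reduced_aux {M} (HT : reducing_triangulation M) l : forall (f : D M) rs,
  is_walk M (hv f) l -> reduced M (f :: l) -> fold_left step l (f :: rs) = List.rev l ++ f :: rs.
Proof.
  induction l as [|d l IH]; intros f rs Hw Hr; [reflexivity|].
  destruct Hw as [Td Hw]. destruct Hr as [Nb Hr].
  cbn [fold_left]. rewrite (step_good HT).
  - rewrite IH; auto. cbn [List.rev]. rewrite <- app_assoc. reflexivity.
  - destruct (bad f d) eqn:B; auto. exfalso. apply Nb.
    destruct (turn_spec HT f d Td) as [Hlt Ed].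
    exists (turn f d), (deg d). split; [apply (deg_spec HT)|]. split; [auto|]. split; [exact Ed|].
    apply bad_true_cases in B. tauto.
Qed.

Lemma NF_reduced {M} (HT : reducing_triangulation M) (v : V M) l :
  is_walk M v l -> reduced M l -> NF l = List.rev l.
Proof.
  destruct l as [|d l]; intros Hw Hr; [reflexivity|].
  unfold NF. simpl. destruct Hw as [_ Hw].
  rewrite (NF_reduced_aux HT l d [] Hw Hr). reflexivity.
Qed.

Theorem proposition3p2 (M : surf_map)
  (HT : reducing_triangulation M) (HC : compact_or_lift M)
  (v : V M) (ds1 ds2 : list (D M)) :
  is_walk M v ds1 -> is_walk M v ds2 ->
  reduced M ds1 -> reduced M ds2 ->
  homotopic M (v, ds1) (v, ds2) ->
  ds1 = ds2.
Proof.
  intros H1 H2 R1 R2 Hh.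
  assert (E : NF (snd (v, ds1)) = NF (snd (v, ds2))).
  { induction Hh as [x y Hm| x | x y _ IH | x y z _ IH1 _ IH2].
    - apply (elem_move_NF HT). exact Hm.
    - reflexivity.
    - symmetry. exact IH.
    - congruence. }
  simpl in E. rewrite (NF_reduced HT v ds1 H1 R1), (NF_reduced HT v ds2 H2 R2) in E.
  rewrite <- (rev_involutive ds1), <- (rev_involutive ds2), E. reflexivity.
Qed.
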